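(* Let $p:\mathbb R^{n\times k}\to\mathbb R$ be a polynomial invariant under all permutations of the last $n-1$ rows of $\mathbf X=(\mathbf x_1,\dots,\mathbf x_n)^T$. Then $$p(\mathbf X)=\sum_{\alpha\in\mathbb N^k,\ |\alpha|\le n}\mathbf x_1^\alpha\,q_\alpha(\mathbf X),$$ where each $q_\alpha:\mathbb R^{n\times k}\to\mathbb R$ is a polynomial invariant under all permutations of the rows of $\mathbf X$ (i.e. $S_n$-invariant).
   Context: For $\mathbf x\in\mathbb R^k$ and $\alpha\in\mathbb N^k$, $\mathbf x^\alpha=x_1^{\alpha_1}\cdots x_k^{\alpha_k}$ and $|\alpha|=\sum_i\alpha_i$. $S_n$ acts on $\mathbf X\in\mathbb R^{n\times k}$ by permuting rows. *)

(* Defs.v *)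
From HB Require Import structures.
From mathcomp Require Import all_boot all_order all_algebra all_fingroup.
From mathcomp Require Import mpoly.
Set Implicit Arguments. Unset Strict Implicit. Unset Printing Implicit Defensive.
Import GRing.Theory.
Local Open Scope ring_scope.

(* A polynomial function on R^{n x k} is represented by a polynomial in the
   n*k variables x_{i,j}; the variable x_{i,j} (entry (i,j) of X, i.e.
   coordinate j of row x_i) has index [mxvec_index i j : 'I_(n*k)]. *)
Definition xvar (R : nzRingType) (n k : nat) (i : 'I_n) (j : 'I_k)
  : {mpoly R[n * k]} := 'X_(mxvec_index i j).

Definition var_pos (n k : nat) (v : 'I_(n * k)) : 'I_n * 'I_k :=
  enum_val (cast_ord (esym (@mxvec_cast n k)) v).

(* The action of a row permutation s : 'S_n on polynomials:
   (s . p)(X) = p(X with row i replaced by row s i), i.e. substitute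
   x_{i,j} := x_{s i, j}. *)
Definition row_act (R : nzRingType) (n k : nat) (s : 'S_n)
  (p : {mpoly R[n * k]}) : {mpoly R[n * k]} :=
  p \mPo [tuple xvar R (s (var_pos v).1) (var_pos v).2 | v < n * k].

Definition row_invariant (R : nzRingType) (n k : nat) (s : 'S_n)
  (p : {mpoly R[n * k]}) : Prop := row_act s p = p.

Definition row_monom (R : nzRingType) (n k : nat) (i1 : 'I_n)
  (a : 'X_{1..k}) : {mpoly R[n * k]} :=
  \prod_(j < k) xvar R i1 j ^+ a j.

(* Main.v *)
Require Import Defs.
From HB Require Import structures.
From mathcomp Require Import all_boot all_order all_algebra all_fingroup.
From mathcomp Require Import mpoly.
From mathcomp Require Import zify ring.
Import GRing.Theory Num.Theory.
Local Open Scope ring_scope.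
Set Implicit Arguments. Unset Strict Implicit.

Section Aux.
Variables (R : realFieldType) (n k : nat).
Local Notation P := {mpoly R[n * k]}.
Local Notation act := (@row_act R n k).
Local Notation xv := (@xvar R n k).
Local Notation rm := (@row_monom R n k).

Lemma var_pos_idx (i : 'I_n) (j : 'I_k) : var_pos (mxvec_index i j) = (i, j).
Proof. by rewrite /var_pos /mxvec_index cast_ordK enum_rankK. Qed.

Lemma idx_var_pos (v : 'I_(n * k)) : mxvec_index (var_pos v).1 (var_pos v).2 = v.
Proof. by case/mxvec_indexP: v => i j; rewrite var_pos_idx. Qed.

Lemma act_xv s i j : act s (xv i j) = xv (s i) j.
Proof.
by rewrite /row_act /xvar comp_mpolyXU -tnth_nth tnth_mktuple var_pos_idx.
Qed.

Lemma actD s : {morph act s : x y / x + y}.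
Proof. by move=> x y; rewrite /row_act raddfD. Qed.
Lemma actM s : {morph act s : x y / x * y}.
Proof. by move=> x y; rewrite /row_act rmorphM. Qed.
Lemma actZ s c p : act s (c *: p) = c *: act s p.
Proof. by rewrite /row_act linearZ. Qed.
Lemma act1 s : act s 1 = 1.
Proof. by rewrite /row_act rmorph1. Qed.
Lemma act0 s : act s 0 = 0.
Proof. by rewrite /row_act raddf0. Qed.
Lemma act_sum s I (r : seq I) (Pr : pred I) F :
  act s (\sum_(i <- r | Pr i) F i) = \sum_(i <- r | Pr i) act s (F i).
Proof. by rewrite /row_act raddf_sum. Qed.
Lemma act_prod s I (r : seq I) (Pr : pred I) F :
  act s (\prod_(i <- r | Pr i) F i) = \prod_(i <- r | Pr i) act s (F i).
Proof. by rewrite /row_act rmorph_prod. Qed.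
Lemma actX s p m : act s (p ^+ m) = (act s p) ^+ m.
Proof. by rewrite /row_act rmorphXn. Qed.

Lemma actE s p : act s p = \sum_(m <- msupp p)
   p@_m *: \prod_(v < n * k) (xv (s (var_pos v).1) (var_pos v).2) ^+ m v.
Proof.
rewrite /row_act comp_mpolyE; apply: eq_bigr => m _; congr (_ *: _).
by apply: eq_bigr => v _; rewrite tnth_mktuple.
Qed.

Lemma act_comp s t p : act t (act s p) = act (s * t)%g p.
Proof.
rewrite [act s p]actE [RHS]actE act_sum; apply: eq_bigr => m _.
rewrite actZ act_prod; congr (_ *: _); apply: eq_bigr => v _.
by rewrite actX act_xv permM.
Qed.

Lemma act_rm s i a : act s (rm i a) = rm (s i) a.
Proof.
rewrite /row_monom act_prod; apply: eq_bigr => j _.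
by rewrite actX act_xv.
Qed.

Definition mon (e : 'I_n -> 'X_{1..k}) : P := \prod_(i < n) rm i (e i).

Lemma mon_ext e e' : e =1 e' -> mon e = mon e'.
Proof. by move=> h; apply: eq_bigr => i _; rewrite h. Qed.

Lemma act_mon s e : act s (mon e) = mon (fun r => e ((s^-1)%g r)).
Proof.
rewrite /mon act_prod [RHS](reindex_inj (@perm_inj _ s)) /=.
by apply: eq_bigr => i _; rewrite act_rm permK.
Qed.

Definition em (m : 'X_{1..n * k}) (i : 'I_n) : 'X_{1..k} :=
  [multinom m (mxvec_index i j) | j < k].

Lemma monX m : 'X_[m] = mon (em m) :> P.
Proof.
rewrite mpolyXE_id /mon /row_monom.
rewrite (eq_bigr (fun i => \prod_(j < k) ('X_(mxvec_index i j)) ^+ m (mxvec_index i j))); last first.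
  by move=> i _; apply: eq_bigr => j _; rewrite mnmE.
rewrite pair_big /=.
rewrite (reindex (fun ij : 'I_n * 'I_k => mxvec_index ij.1 ij.2)) //=.
exists (fun v => var_pos v) => [[i j] _ | v _] /=; first by rewrite var_pos_idx.
by rewrite idx_var_pos.
Qed.

Lemma decomp p : p = \sum_(m <- msupp p) p@_m *: mon (em m).
Proof.
by rewrite {1}[p]mpolyE; apply: eq_bigr => m _; rewrite monX.
Qed.


Lemma rm0 i : rm i 0%MM = 1.
Proof. by rewrite /row_monom big1 // => j _; rewrite mnm0E expr0. Qed.

Lemma rmD i a b : rm i (a + b)%MM = rm i a * rm i b.
Proof.
by rewrite /row_monom -big_split; apply: eq_bigr => j _; rewrite mnmDE exprD.
Qed.

Lemma rmU i j : rm i U_(j)%MM = xv i j.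
Proof.
rewrite /row_monom (bigD1 j) //= mnm1E eqxx expr1 big1 ?mulr1 //.
by move=> j' /negbTE; rewrite mnm1E eq_sym => ->; rewrite expr0.
Qed.

Lemma rm_sum i I (r : seq I) (Pr : pred I) (js : I -> 'I_k) :
  rm i (\sum_(t <- r | Pr t) U_(js t))%MM = \prod_(t <- r | Pr t) xv i (js t).
Proof.
rewrite (big_morph (rm i) (rmD i) (rm0 i)).
by apply: eq_bigr => t _; rewrite rmU.
Qed.

Definition symG (f : P) : P := \sum_(s : 'S_n) act s f.

Lemma symG_inv f t : act t (symG f) = symG f.
Proof.
rewrite /symG act_sum (reindex_inj (mulIg t^-1)%g) /=.
by apply: eq_bigr => s _; rewrite act_comp mulgKV.
Qed.

Lemma prod_if (J : {set 'I_n}) (A B : 'I_n -> P) :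
  \prod_(t < n) (if t \in J then A t else B t) =
  \prod_(t in J) A t * \prod_(t in ~:J) B t.
Proof.
rewrite (bigID (mem J)) /=; congr (_ * _).
  by apply: eq_big => // t /= ->.
apply: eq_big => [t|t /negbTE ->] //=; by rewrite in_setC.
Qed.

Lemma key_id (i0 : 'I_n) (js : 'I_n -> 'I_k) :
  (#|'S_n|%:R : R) *: \prod_(t < n) xv i0 (js t) =
  - \sum_(J : {set 'I_n} | J != set0)
      rm i0 (\sum_(t in ~:J) U_(js t))%MM * symG (\prod_(t in J) - xv t (js t)).
Proof.
have H0 : \sum_(J : {set 'I_n}) \sum_(s : 'S_n) \prod_(t < n)
    (if t \in J then - xv (s t) (js t) else xv i0 (js t)) = 0.
  rewrite exchange_big /=; apply: big1 => s _.
  rewrite -(bigA_distr _ _ (fun t => - xv (s t) (js t)) (fun t => xv i0 (js t))).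
  by rewrite (bigD1 ((s^-1)%g i0)) //= permKV addNr mul0r.
apply/eqP; rewrite -addr_eq0; apply/eqP; rewrite -[RHS]H0.
rewrite [RHS](bigD1 set0) //=; congr (_ + _).
  rewrite [RHS](eq_bigr (fun _ => \prod_(t < n) xv i0 (js t))) => [|s _]; last first.
    by apply: eq_bigr => t _; rewrite in_set0.
  by rewrite sumr_const scaler_nat.
apply: eq_bigr => J _; rewrite /symG mulr_sumr; apply: eq_bigr => s _.
rewrite prod_if mulrC rm_sum act_prod; congr (_ * _).
by apply: eq_bigr => t _; rewrite /row_act raddfN /= -/(row_act _ _) act_xv.
Qed.

End Aux.

Section Main.
Variables (R : realFieldType) (n k : nat) (i0 : 'I_n).
Local Notation P := {mpoly R[n * k]}.
Local Notation act := (@row_act R n k).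
Local Notation xv := (@xvar R n k).
Local Notation rm := (@row_monom R n k).
Local Notation mon := (@mon R n k).
Local Notation symG := (@symG R n k).

Definition inv (q : P) := forall s : 'S_n, act s q = q.
Definition inM (p : P) := exists q : 'X_{1..k < n.+1} -> P,
  (forall a, inv (q a)) /\ p = \sum_(a : 'X_{1..k < n.+1}) rm i0 a * q a.

Lemma inM0 : inM 0.
Proof.
exists (fun _ => 0); split => [a s|]; first exact: act0.
by rewrite big1 // => a _; rewrite mulr0.
Qed.

Lemma inMD p1 p2 : inM p1 -> inM p2 -> inM (p1 + p2).
Proof.
case=> q1 [h1 ->] [q2 [h2 ->]]; exists (fun a => q1 a + q2 a); split.
  by move=> a s; rewrite actD h1 h2.
by rewrite -big_split; apply: eq_bigr => a _; rewrite mulrDr.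
Qed.

Lemma inMZ c p : inM p -> inM (c *: p).
Proof.
case=> q [h ->]; exists (fun a => c *: q a); split.
  by move=> a s; rewrite actZ h.
by rewrite scaler_sumr; apply: eq_bigr => a _; rewrite scalerAr.
Qed.

Lemma inM_sum I (r : seq I) (Pr : pred I) F :
  (forall i, Pr i -> inM (F i)) -> inM (\sum_(i <- r | Pr i) F i).
Proof. by move=> h; apply: (big_ind inM) => //; [exact: inM0 | exact: inMD]. Qed.

Lemma split_js m (g : 'X_{1..k}) : (m <= mdeg g)%N ->
  exists js : 'I_m -> 'I_k, exists d, g = (d + \sum_(t < m) U_(js t))%MM.
Proof.
elim: m g => [|m IH] g hm.
  have f : 'I_0 -> 'I_k by case=> m; rewrite ltn0.
  by exists f, g; rewrite big_ord0 addm0.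
have [js [d hg]] := IH g (ltnW hm).
have hd : mdeg g = (mdeg d + m)%N.
  rewrite hg mdegD mdeg_sum (eq_bigr (fun _ => 1%N)) => [|t _]; last exact: mdeg1.
  by rewrite sum1_card card_ord.
case: (pickP (fun j => d j != 0%N)) => [j hj | h0]; last first.
  have : mdeg d = 0%N by rewrite mdegE big1 // => j _; move: (h0 j) => /= /negbFE /eqP.
  by move: hm; rewrite hd => ? ?; lia.
exists (fun t => if unlift ord0 t is Some t' then js t' else j), (d - U_(j))%MM.
rewrite big_ord_recl /= unlift_none hg addmA; congr (_ + _)%MM.
  apply/mnmP => i; rewrite !mnmDE mnmBE mnm1E.
  by case: eqP => [<-|]; [rewrite addn1 subn1 prednK // lt0n | rewrite subn0 addn0].
by apply: eq_bigr => t _; rewrite liftK.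
Qed.


Lemma card_Sn_neq0 : (#|'S_n|%:R : R) != 0.
Proof. by rewrite pnatr_eq0 -lt0n; apply/card_gt0P; exists 1%g. Qed.

Lemma inM_monom N : forall (g : 'X_{1..k}) (r : P),
  (mdeg g < N)%N -> inv r -> inM (rm i0 g * r).
Proof.
elim: N => [|N IH] g r hN hr; first by rewrite ltn0 in hN.
case: (ltnP (mdeg g) n.+1) => hs.
  exists (fun a => if (a : 'X_{1..k}) == g then r else 0); split.
    by move=> a s; case: ifP => _; [exact: hr | exact: act0].
  rewrite (bigD1 (BMultinom hs)) //= eqxx big1 ?addr0 // => a.
  by rewrite bmeqP /= => /negbTE ->; rewrite mulr0.
have [js [d hg]] := split_js (ltnW hs).
have hc := card_Sn_neq0.
have E : rm i0 g * r = \sum_(J : {set 'I_n} | J != set0)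
   rm i0 (d + \sum_(t in ~:J) U_(js t))%MM *
     ((- (#|'S_n|%:R : R)^-1) *: (symG (\prod_(t in J) - xv t (js t)) * r)).
  rewrite hg rmD rm_sum.
  have -> : \prod_(t < n) xv i0 (js t) = (#|'S_n|%:R : R)^-1 *:
      ((#|'S_n|%:R : R) *: \prod_(t < n) xv i0 (js t)).
    by rewrite scalerA mulVf ?scale1r.
  rewrite key_id scalerN -scaleNr scaler_sumr mulr_sumr mulr_suml.
  apply: eq_bigr => J _; rewrite rmD -!mul_mpolyC; ring.
rewrite E; apply: inM_sum => J hJ; apply: IH.
  have h1 : mdeg g = (mdeg d + n)%N.
    rewrite hg mdegD mdeg_sum (eq_bigr (fun _ => 1%N)) => [|t _]; last exact: mdeg1.
    by rewrite sum1_card card_ord.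
  have h2 : mdeg (\sum_(t in ~:J) U_(js t))%MM = #|~:J|.
    rewrite mdeg_sum (eq_bigr (fun _ => 1%N)) => [|t _]; last exact: mdeg1.
    by rewrite sum1_card.
  have h3 := cardsC J; rewrite card_ord in h3.
  have h4 : (0 < #|J|)%N by rewrite card_gt0.
  rewrite mdegD h2; lia.
by move=> s; rewrite actZ actM symG_inv hr.
Qed.

Lemma inM_mulrm g p : inM p -> inM (rm i0 g * p).
Proof.
case=> q [hq ->]; rewrite mulr_sumr; apply: inM_sum => a _.
by rewrite mulrA -rmD; apply: (@inM_monom (mdeg (g + a)%MM).+1).
Qed.

Lemma inM_inv r : inv r -> inM r.
Proof. by move=> hr; have := @inM_monom 1 0%MM r; rewrite rm0 mul1r mdeg0; apply. Qed.


Definition symH (f : P) : P := \sum_(h : 'S_n | h i0 == i0) act h f.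
Definition supp (e : 'I_n -> 'X_{1..k}) := [set r | e r != 0%MM].
Definition ez (e : 'I_n -> 'X_{1..k}) := fun r => if r == i0 then 0%MM else e r.

Lemma mon_split e : mon e = rm i0 (e i0) * mon (ez e).
Proof.
rewrite /mon (bigD1 i0) //= [in RHS](bigD1 i0) //= /ez eqxx rm0 mul1r.
by congr (_ * _); apply: eq_bigr => r /negbTE ->.
Qed.

Lemma symH_mulrm g f : symH (rm i0 g * f) = rm i0 g * symH f.
Proof.
by rewrite /symH mulr_sumr; apply: eq_bigr => h /eqP hh; rewrite actM act_rm hh.
Qed.

Lemma coset i f : \sum_(s : 'S_n | (s^-1)%g i0 == i) act s f
   = symH (act (tperm i0 i) f).
Proof.
rewrite (reindex_inj (mulgI (tperm i0 i))) /=.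
apply: eq_big => [h | h _]; last by rewrite act_comp.
rewrite invMg permM tpermV -[X in _ == X](tpermL i0 i) (inj_eq perm_inj).
by rewrite -(inj_eq (@perm_inj _ h)) permKV eq_sym.
Qed.

Lemma symH_mon N : forall e, (#|supp e| < N)%N -> inM (symH (mon e)).
Proof.
elim: N => [|N IH] e he; first by rewrite ltn0 in he.
rewrite mon_split symH_mulrm; apply: inM_mulrm.
set e' := ez e.
have he' : (#|supp e'| < N.+1)%N.
  apply: leq_ltn_trans he; apply: subset_leq_card; apply/subsetP => r.
  by rewrite !inE /e' /ez; case: (r == i0) => //=; rewrite eqxx.
have Hi0 : e' i0 = 0%MM by rewrite /e' /ez eqxx.
pose X i := symH (act (tperm i0 i) (mon e')).
have EG : symG (mon e') = \sum_(i < n) X i.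
  rewrite /symG (partition_big (fun s : 'S_n => (s^-1)%g i0) predT) //=.
  by apply: eq_bigr => i _; rewrite /X -coset.
have EX i : X i = rm i0 (e' i) * symH (mon (ez (fun r => e' (tperm i0 i r)))).
  have -> : e' i = e' (tperm i0 i i0) by rewrite tpermL.
  by rewrite -symH_mulrm -(mon_split (fun r => e' (tperm i0 i r))) /X act_mon tpermV.
have Ez i : e' i == 0%MM -> X i = symH (mon e').
  move=> /eqP hz; rewrite EX hz rm0 mul1r; congr (symH _); apply: mon_ext => r.
  rewrite /ez; case: (eqVneq r i0) => [-> | hr0]; first by rewrite Hi0.
  case: (eqVneq r i) => [-> | hri]; first by rewrite tpermR Hi0 hz.
  by rewrite tpermD // eq_sym.
have Enz i : e' i != 0%MM -> inM (X i).
  move=> hnz; rewrite EX; apply: inM_mulrm; apply: IH.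
  have h1 : (#|supp (ez (fun r => e' (tperm i0 i r)))| <= #|supp e' :\ i|)%N.
    apply: subset_leq_card; apply/subsetP => r; rewrite !inE /ez.
    case: (eqVneq r i0) => [_|hr0]; first by rewrite eqxx.
    case: (eqVneq r i) => [->|hri]; first by rewrite tpermR Hi0 eqxx.
    by rewrite tpermD // eq_sym.
  have h2 := cardsD1 i (supp e'); rewrite inE hnz in h2; lia.
have Hsum : symG (mon e') = (#|[pred i | e' i == 0%MM]|%:R : R) *: symH (mon e')
    + \sum_(i | e' i != 0%MM) X i.
  rewrite EG (bigID (fun i => e' i == 0%MM)) /=; congr (_ + _).
  rewrite scaler_nat -sumr_const; apply: eq_big => [i | i hi]; first by rewrite inE.
  by rewrite Ez.
have hc : (#|[pred i | e' i == 0%MM]|%:R : R) != 0.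
  by rewrite pnatr_eq0 -lt0n; apply/card_gt0P; exists i0; rewrite inE Hi0.
have -> : symH (mon e') = (#|[pred i | e' i == 0%MM]|%:R : R)^-1 *:
    (symG (mon e') - \sum_(i | e' i != 0%MM) X i).
  by rewrite Hsum addrK scalerA mulVf ?scale1r.
apply: inMZ; apply: inMD; first by apply: inM_inv => s; exact: symG_inv.
rewrite -scaleN1r; apply: inMZ; apply: inM_sum => i; exact: Enz.
Qed.


Lemma inM_Hinv p : (forall h : 'S_n, h i0 = i0 -> act h p = p) -> inM p.
Proof.
move=> hp.
have E1 : symH p = p *+ #|[pred h : 'S_n | h i0 == i0]|.
  rewrite -sumr_const /symH; apply: eq_big => [h|h /eqP hh]; first by rewrite inE.
  exact: hp.
have E2 : symH p = \sum_(m <- msupp p) p@_m *: symH (mon (em m)).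
  rewrite {1}[p]decomp /symH.
  under eq_bigr do rewrite act_sum.
  rewrite exchange_big /=; apply: eq_bigr => m _.
  by rewrite scaler_sumr; apply: eq_bigr => h _; rewrite actZ.
have hc : (#|[pred h : 'S_n | h i0 == i0]|%:R : R) != 0.
  by rewrite pnatr_eq0 -lt0n; apply/card_gt0P; exists 1%g; rewrite inE perm1.
have -> : p = (#|[pred h : 'S_n | h i0 == i0]|%:R : R)^-1 *: symH p.
  by rewrite E1 -scaler_nat scalerA mulVf ?scale1r.
rewrite E2; apply: inMZ; apply: inM_sum => m _; apply: inMZ.
exact: (@symH_mon (#|supp (em m)|).+1).
Qed.

End Main.

Unset Implicit Arguments.
Set Strict Implicit.

Theorem lemma2 (R : realFieldType) (n k : nat) (hn : (0 < n)%N)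
  (p : {mpoly R[n * k]}) :
  (forall s : 'S_n, s (Ordinal hn) = Ordinal hn -> row_invariant s p) ->
  exists q : 'X_{1..k < n.+1} -> {mpoly R[n * k]},
    (forall a, forall s : 'S_n, row_invariant s (q a)) /\
    p = \sum_(a : 'X_{1..k < n.+1}) row_monom R (Ordinal hn) a * q a.
Proof. by move=> hp; apply: (@inM_Hinv R n k (Ordinal hn) p). Qed.
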